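(* Let $(E,\tau)$ be a locally solid vector lattice such that $\tau$ is metrisable and complete. Then $\tau$ is locally interval complete solidly submetrisable.
   Context: All vector lattices are real and Archimedean; linear topologies are Hausdorff. A locally solid topology on a vector lattice is a linear topology such that zero has a neighbourhood basis of solid sets. For $x\in E$, $B_x$ denotes the band generated by $x$. A locally solid topology $\tau$ on $E$ is locally interval complete solidly submetrisable if for every $x\in E^+$ there exists a metrisable locally solid topology $\widetilde\tau_x$ on $B_x$ such that (a) $\tau|_{B_x}$ is finer than $\widetilde\tau_x$, and (b) every $\widetilde\tau_x$-Cauchy sequence in the order interval $[0,x]$ is $\widetilde\tau_x$-convergent to an element of $[0,x]$. *)

(* Defs.v *)
(* vector lattice = real lmodType with an explicit order relation,
   topologies represented set-theoretically (families of open sets). *)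
From HB Require Import structures.
From mathcomp Require Import all_boot all_order all_algebra.
From mathcomp Require Import boolp classical_sets reals.

Set Implicit Arguments.
Unset Strict Implicit.
Unset Printing Implicit Defensive.

Import Order.TTheory GRing.Theory Num.Theory.
Local Open Scope ring_scope.
Local Open Scope classical_set_scope.

Section VectorLatticeDefs.
Variables (R : realType) (E : lmodType R).

Variable le : E -> E -> Prop.

Definition is_sup (D : set E) (s : E) : Prop :=
  (forall y, D y -> le y s) /\
  (forall u, (forall y, D y -> le y u) -> le s u).

Definition is_inf (D : set E) (i : E) : Prop :=
  (forall y, D y -> le i y) /\
  (forall u, (forall y, D y -> le u y) -> le u i).

Definition vector_lattice : Prop :=
  [/\ (forall x, le x x),
      (forall x y, le x y -> le y x -> x = y) &
      (forall x y z, le x y -> le y z -> le x z)] /\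
  [/\ (forall x y z, le x y -> le (x + z) (y + z)) &
      (forall (a : R) x, 0 <= a -> le 0 x -> le 0 (a *: x))] /\
  [/\ (forall x y, exists s, is_sup [set x; y] s) &
      (forall x y, exists i, is_inf [set x; y] i)] /\
  (forall x y, le 0 x -> (forall n : nat, le (x *+ n) y) -> x = 0).

Definition is_abs (x a : E) : Prop := is_sup [set x; - x] a.

Definition solid (A : set E) : Prop :=
  forall x y ax ay : E, A x -> is_abs x ax -> is_abs y ay -> le ay ax -> A y.

Definition lin_subspace (A : set E) : Prop :=
  A 0 /\ (forall x y, A x -> A y -> A (x + y)) /\
  (forall (a : R) x, A x -> A (a *: x)).


Definition ideal (A : set E) : Prop := lin_subspace A /\ solid A.

Definition band (A : set E) : Prop :=
  ideal A /\ (forall (D : set E) (s : E), D `<=` A -> is_sup D s -> A s).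

Definition band_gen (x : E) : set E :=
  [set y | forall B : set E, band B -> B x -> B y].

Definition order_interval (x : E) : set E :=
  [set y | le 0 y /\ le y x].

Definition topology_on (S : set E) (O : set (set E)) : Prop :=
  (forall U, O U -> U `<=` S) /\ O S /\ O set0 /\
  (forall F : set (set E), F `<=` O -> O (\bigcup_(U in F) U)) /\
  (forall U V, O U -> O V -> O (U `&` V)).

Definition tnbhs (O : set (set E)) (x : E) (U : set E) : Prop :=
  exists V, [/\ O V, V x & V `<=` U].

Definition hausdorff_on (S : set E) (O : set (set E)) : Prop :=
  forall x y, S x -> S y -> x <> y ->
    exists U V, [/\ O U, O V, U x, V y & U `&` V = set0].

(* linear (Hausdorff) topology on the linear subspace S: addition S x S -> S
   and scalar multiplication R x S -> S are continuous (product topologies) *)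
Definition linear_topology_on (S : set E) (O : set (set E)) : Prop :=
  [/\ lin_subspace S, topology_on S O, hausdorff_on S O,
   (forall x y, S x -> S y -> forall W, tnbhs O (x + y) W ->
      exists U V, [/\ tnbhs O x U, tnbhs O y V &
        forall u v, S u -> S v -> U u -> V v -> W (u + v)]) &
   (forall (a : R) x, S x -> forall W, tnbhs O (a *: x) W ->
      exists (e : R) U, [/\ 0 < e, tnbhs O x U &
        forall (b : R) u, `|b - a| < e -> S u -> U u -> W (b *: u)])].

Definition locally_solid_on (S : set E) (O : set (set E)) : Prop :=
  linear_topology_on S O /\
  forall U, tnbhs O 0 U -> exists V, [/\ tnbhs O 0 V, V `<=` S, solid V & V `<=` U].

Definition metrisable_on (S : set E) (O : set (set E)) : Prop :=
  exists dist : E -> E -> R,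
  [/\ (forall x y, S x -> S y -> 0 <= dist x y),
      (forall x y, S x -> S y -> (dist x y = 0 <-> x = y)),
      (forall x y, S x -> S y -> dist x y = dist y x),
      (forall x y z, S x -> S y -> S z -> dist x z <= dist x y + dist y z) &
      (forall U, O U <-> (U `<=` S /\
          forall x, U x -> exists2 e : R, 0 < e &
            [set y | S y /\ dist x y < e] `<=` U))].

Definition proper_filter_on (S : set E) (F : set (set E)) : Prop :=
  [/\ F S, ~ F set0,
      (forall A B, F A -> F B -> F (A `&` B)) &
      (forall A B, F A -> A `<=` B -> F B)].

(* Cauchy filters / sequences w.r.t. the uniformity of the linear topology *)
Definition cauchy_filter (O : set (set E)) (F : set (set E)) : Prop :=
  forall U, tnbhs O 0 U -> exists2 A, F A & forall a b, A a -> A b -> U (a - b).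

Definition filter_converges (O : set (set E)) (F : set (set E)) (x : E) : Prop :=
  forall U, tnbhs O x U -> F U.

Definition complete_on (S : set E) (O : set (set E)) : Prop :=
  forall F, proper_filter_on S F -> cauchy_filter O F ->
    exists2 x, S x & filter_converges O F x.

Definition cauchy_seq (O : set (set E)) (u : nat -> E) : Prop :=
  forall U, tnbhs O 0 U ->
    exists N : nat, forall m n, (N <= m)%N -> (N <= n)%N -> U (u n - u m).

Definition seq_converges (O : set (set E)) (u : nat -> E) (x : E) : Prop :=
  forall U, tnbhs O x U -> exists N : nat, forall n, (N <= n)%N -> U (u n).

Definition subspace_topology (O : set (set E)) (B : set E) : set (set E) :=
  [set U | exists2 V, O V & U = V `&` B].

Definition finer (O1 O2 : set (set E)) : Prop := O2 `<=` O1.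

Definition lics_submetrisable (O : set (set E)) : Prop :=
  forall x : E, le 0 x ->
    exists Ox : set (set E),
    [/\ locally_solid_on (band_gen x) Ox,
        metrisable_on (band_gen x) Ox,
        finer (subspace_topology O (band_gen x)) Ox &
        forall u : nat -> E, (forall n, order_interval x (u n)) ->
          cauchy_seq Ox u ->
          exists2 y, order_interval x y & seq_converges Ox u y].

End VectorLatticeDefs.

(* Main.v *)
Require Import Defs.
From mathcomp Require Import all_boot all_order all_algebra.
From mathcomp Require Import boolp classical_sets reals.
From mathcomp Require Import lra.
Set Implicit Arguments.
Unset Strict Implicit.
Import Order.TTheory GRing.Theory Num.Theory.
Local Open Scope ring_scope.
Local Open Scope classical_set_scope.

Lemma setU2P (T : Type) (a b z : T) : [set a; b] z <-> z = a \/ z = b.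
Proof. by []. Qed.

Lemma abs_props (R : realType) (E : lmodType R) (le : E -> E -> Prop) :
  vector_lattice le -> forall z a, is_abs le z a -> [/\ le z a, le (-z) a & le 0 a].
Proof.
move=> [[lerefl _ letr] [[leadd lesc] _]] z a [ub _].
have h1 : le z a by apply: ub; left.
have h2 : le (-z) a by apply: ub; right.
split => //.
have h3 : le 0 (a + a).
  apply: (letr _ (a + - z)).
    by have := leadd _ _ (-z) h1; rewrite subrr.
  by have := leadd _ _ a h2; rewrite addrC [a + a]addrC.
have -> : a = (2^-1 : R) *: (a + a).
  by rewrite -mulr2n -scaler_nat scalerA mulVf ?scale1r // pnatr_eq0.
apply: lesc => //; by rewrite invr_ge0 ler0n.
Qed.

Lemma abs_pos (R : realType) (E : lmodType R) (le : E -> E -> Prop) :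
  vector_lattice le -> forall v, le 0 v -> is_abs le v v.
Proof.
move=> [[lerefl _ letr] [[leadd lesc] _]] v v0; split.
  move=> y [->|->] //.
  apply: (letr _ 0).
    by have := leadd _ _ (-v) v0; rewrite add0r subrr.
  done.
by move=> u hu; apply: hu; left.
Qed.

Lemma key (R : realType) (E : lmodType R) (le : E -> E -> Prop) (O : set (set E)) :
  vector_lattice le -> locally_solid_on le setT O ->
  forall a, (forall W, tnbhs O 0 W -> solid le W ->
     exists z, W z /\ exists az, is_abs le z az /\ le a az) -> le a 0.
Proof.
move=> VL [[_ _ hH _ _] hsol] a ha.
have VL' := VL.
case: VL' => [[lerefl leanti letr] [[leadd lesc] [[hsup _] _]]].
have [s [sub sl]] := hsup a 0.
have s0 : le 0 s by apply: sub; right.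
have as_ : le a s by apply: sub; left.
suff e0 : s = 0 by rewrite -e0.
apply: contrapT => sn0.
have [U [V [oU oV Us V0 UV]]] := hH s 0 I I sn0.
have [W [nW _ sW WV]] := hsol V (ex_intro _ V (And3 oV V0 (@subset_refl _ V))).
have [z [Wz [az [abz aaz]]]] := ha W nW sW.
have [_ _ az0] := abs_props VL abz.
have saz : le s az by apply: sl => y [->|->].
have Ws : W s by apply: (sW z s az s Wz abz (abs_pos VL s0) saz).
have : (U `&` V) s by split => //; apply: WV.
by rewrite UV.
Qed.

Section X.
Lemma band_gen_lin (R : realType) (E : lmodType R) (le : E -> E -> Prop) x :
  lin_subspace (band_gen le x).
Proof.
split; first by move=> B [[[]]].
split.
  by move=> y z hy hz B hB hx; case: (hB) => [[[_ [hadd _]] _] _]; apply: hadd; [apply: hy|apply: hz].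
by move=> a y hy B hB hx; case: (hB) => [[[_ [_ hsc]] _] _]; apply: hsc; apply: hy.
Qed.

Lemma band_gen_solid (R : realType) (E : lmodType R) (le : E -> E -> Prop) x :
  solid le (band_gen le x).
Proof.
move=> y z ay az hy hay haz hle B hB hx.
case: (hB) => [[_ hs] _]; exact: (hs y z ay az (hy B hB hx) hay haz hle).
Qed.

Lemma interval_in_band (R : realType) (E : lmodType R) (le : E -> E -> Prop) x v :
  vector_lattice le -> le 0 x -> le 0 v -> le v x -> band_gen le x v.
Proof.
move=> VL x0 v0 vx.
apply: (@band_gen_solid _ _ le x x v x v _ (abs_pos VL x0) (abs_pos VL v0) vx).
by move=> B.

Qed.
End X.

Theorem proposition3p8 (R : realType) (E : lmodType R)
  (le : E -> E -> Prop) (O : set (set E)) :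
  vector_lattice le ->
  locally_solid_on le setT O -> metrisable_on setT O -> complete_on setT O ->
  lics_submetrisable le O.
Proof.
move=> VL LS [d [d0 dEq dsym dtri hO]] comp x x0.
have VL' := VL.
case: VL' => [[lerefl leanti letr] [[leadd lesc] [[hsup _] _]]].
have LS' := LS.
case: LS' => [[_ tO hH hadd hsc] hsol].
case: tO => [_ [OT [O0 [Ounion Ointer]]]].
set B := band_gen le x.
have [B0 [Badd Bsc]] := band_gen_lin le x.
have Bsol : solid le B by apply: band_gen_solid.
set Ox := subspace_topology O B.
have L1 : forall z U, B z -> tnbhs O z U -> tnbhs Ox z U.
  move=> z U Bz [V [oV Vz VU]]; exists (V `&` B); split => //.
    by exists V.
  by move=> y [/VU].
have L2 : forall z U, tnbhs Ox z U -> exists W, tnbhs O z W /\ W `&` B `<=` U.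
  move=> z U [V [[W oW ->] [Wz Bz] VU]]; exists W; split => //.
  by exists W; split.
exists Ox; split.
- split; first split.
  + exact: band_gen_lin.
  + split; first by move=> U [V _ ->] y [].
    split; first by exists setT => //; rewrite setTI.
    split; first by exists set0 => //; rewrite set0I.
    split.
      move=> F FO.
      exists (\bigcup_(W in [set W | O W /\ F (W `&` B)]) W).
        by apply: Ounion => W [].
      apply/seteqP; split.
        move=> y [U FU Uy].
        have [W oW eU] := FO U FU.
        rewrite eU in FU Uy; case: Uy => Wy By.
        by split => //; exists W.
      by move=> y [[W [oW FW] Wy] By]; exists (W `&` B).
    move=> U V [U' oU ->] [V' oV ->]; exists (U' `&` V'); first exact: Ointer.
    by apply/seteqP; split => y /=; [move=> [[? ?] [? ?]] | move=> [[? ?] ?]].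
  + move=> y z By Bz yz.
    have [U [V [oU oV Uy Vz UV]]] := hH y z I I yz.
    exists (U `&` B), (V `&` B); split; [by exists U|by exists V|by []|by []|].
    by apply/seteqP; split => w // [[Uw _] [Vw _]]; rewrite -UV.
  + move=> y z By Bz W nW.
    have [W' [nW' W'W]] := L2 _ _ nW.
    have [U [V [nU nV hUV]]] := hadd y z I I W' nW'.
    exists U, V; split; [exact: L1|exact: L1|].
    move=> u v Bu Bv Uu Vv; apply: W'W; split; first exact: hUV.
    exact: Badd.
  + move=> a y By W nW.
    have [W' [nW' W'W]] := L2 _ _ nW.
    have [e [U [e0 nU hU]]] := hsc a y I W' nW'.
    exists e, U; split => //; first exact: L1.
    move=> b u hb Bu Uu; apply: W'W; split; first exact: hU.
    exact: Bsc.
- move=> U nU.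
  have [W' [nW' W'W]] := L2 _ _ nU.
  have [V [nV _ sV VW]] := hsol W' nW'.
  exists (V `&` B); split.
  + case: nV => V1 [oV1 V10 V1V]; exists (V1 `&` B); split => //; first by exists V1.
    by move=> y [/V1V ? ?]; split.
  + by move=> ? [].
  + move=> y z ay az [Vy By] hay haz hle; split.
      exact: (sV y z ay az Vy hay haz hle).
    exact: (Bsol y z ay az By hay haz hle).
  + by move=> y [Vy By]; apply: W'W; split => //; apply: VW.
- exists d; split.
  + by move=> y z _ _; exact: d0.
  + by move=> y z _ _; exact: dEq.
  + by move=> y z _ _; exact: dsym.
  + by move=> y z w _ _ _; exact: dtri.
  + move=> U; split.
    * move=> [V oV ->]; split; first by move=> y [].
      move=> y [Vy By]; have [_ hb] := (hO V).1 oV.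
      have [e e0 he] := hb y Vy.
      by exists e => // w [Bw dw]; split => //; apply: he; split.
    * move=> [UB hU].
      exists [set z | exists x1 e, [/\ U x1, 0 < e, [set y | B y /\ d x1 y < e] `<=` U & d x1 z < e]].
        apply/hO; split => // z [x1 [e [Ux1 e0 he dz]]].
        exists (e - d x1 z); first by rewrite subr_gt0.
        move=> w [_ dw]; exists x1, e; split => //.
        have := dtri x1 z w I I I; lra.
      apply/seteqP; split.
        move=> z Uz; split; last exact: UB.
        have [e e0 he] := hU z Uz; exists z, e; split => //.
        by have -> : d z z = 0 by apply/dEq.
      by move=> z [[x1 [e [Ux1 e0 he dz]]] Bz]; apply: he; split.
- exact: subset_refl.
- move=> u hu cu.
  have Bu : forall n, B (u n) := fun n => interval_in_band VL x0 (hu n).1 (hu n).2.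
  have cuO : cauchy_seq O u.
    move=> U [V [oV V0 VU]].
    have nU : tnbhs Ox 0 U.
      exists (V `&` B); split => //; first by exists V.
      by move=> y [/VU].
    have [N hN] := cu U nU; by exists N.
  pose F := [set A | exists N, forall n, (N <= n)%N -> A (u n)].
  have pF : proper_filter_on setT F.
    split.
    - by exists 0%N.
    - by move=> [N hN]; apply: (hN N).
    - move=> A1 A2 [N1 h1] [N2 h2]; exists (maxn N1 N2) => n hn; split.
        by apply: h1; exact: leq_trans (leq_maxl _ _) hn.
      by apply: h2; exact: leq_trans (leq_maxr _ _) hn.
    - by move=> A1 A2 [N h] sub; exists N => n hn; apply: sub; exact: h.
  have cF : cauchy_filter O F.
    move=> U nU; have [N hN] := cuO U nU.
    exists [set a | exists2 n, (N <= n)%N & a = u n].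
      by exists N => n hn; exists n.
    by move=> a b [n hn ->] [m hm ->]; exact: hN.
  have [y _ conv] := comp F pF cF.
  have near0 : forall W, tnbhs O 0 W -> exists n, W (u n - y).
    move=> W nW.
    have nW' : tnbhs O (y + - y) W by rewrite subrr.
    have [U [V [nU nV hUV]]] := hadd y (-y) I I W nW'.
    have Vy : V (-y) by case: nV => V1 [_ ? ?]; auto.
    have [N hN] := conv U nU.
    by exists N; apply: hUV => //; apply: hN.
  have habs : forall W, tnbhs O 0 W -> exists n, W (u n - y) /\
      exists az, [/\ is_abs le (u n - y) az, le (u n - y) az & le (- (u n - y)) az].
    move=> W nW; have [n Wn] := near0 W nW; exists n; split => //.
    have [az haz] := hsup (u n - y) (- (u n - y)).
    have [h1 h2 _] := abs_props VL haz.
    by exists az; split.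
  exists y.
    split.
    + have h : le (- y) 0.
        apply: (key VL LS) => W nW sW.
        have [n [Wn [az [haz h1 h2]]]] := habs W nW.
        exists (u n - y); split => //; exists az; split => //.
        apply: letr h1.
        by have := leadd 0 (u n) (-y) (hu n).1; rewrite add0r.
      by have := leadd _ _ y h; rewrite addNr add0r.
    + have h : le (y - x) 0.
        apply: (key VL LS) => W nW sW.
        have [n [Wn [az [haz h1 h2]]]] := habs W nW.
        exists (u n - y); split => //; exists az; split => //.
        apply: letr h2.
        have := leadd _ _ (y - u n - x) (hu n).2.
        have -> : u n + (y - u n - x) = y - x by rewrite [y - u n]addrC -[- u n + y - x]addrA addNKr.
        have -> : x + (y - u n - x) = - (u n - y) by rewrite addrC subrK opprB.
        done.
      by have := leadd _ _ x h; rewrite subrK add0r.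
  move=> U [V [[V' oV' ->] [V'y By] VU]].
  have [N hN] := conv V' (ex_intro _ V' (And3 oV' V'y (@subset_refl _ V'))).
  by exists N => n hn; apply: VU; split; [exact: hN | exact: Bu].
Qed.
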